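(* Let $f$ be a positive definite function and $W=\{w_1,\dots,w_N\}\subset V$. Then the GBF interpolation operator satisfies $$\sup_{x\in\mathcal{L}(G),\ \|x\|\le1}\|\mathrm{I}_Wx\|\le\|\mathbf{K}_{f,W}^{-1}\|\,\|\mathbf{K}_f\|\le\frac{\max_{1\le k\le n}\hat{f}_k}{\min_{1\le k\le n}\hat{f}_k}.$$
   Context: Let $G$ be a graph with vertex set $V=\{v_1,\dots,v_n\}$, symmetric non-negative weighted adjacency matrix $\mathbf{A}$, degree matrix $\mathbf{D}=\mathrm{diag}(\sum_k\mathbf{A}_{ik})$ (positive), and normalized Laplacian $\mathbf{L}=\mathbf{I}_n-\mathbf{D}^{-1/2}\mathbf{A}\mathbf{D}^{-1/2}$. Signals are vectors in $\mathcal{L}(G)\cong\mathbb{R}^n$ with euclidean norm $\|\cdot\|$ and standard basis $e_1,\dots,e_n$; matrix norms are spectral norms. Fix an orthonormal eigendecomposition $\mathbf{L}=\mathbf{U}\,\mathrm{diag}(\lambda_1,\dots,\lambda_n)\mathbf{U}^\intercal$ with columns $u_1,\dots,u_n$. Fourier transform $\hat{x}=\mathbf{U}^\intercal x$; convolution operator $\mathbf{C}_x=\mathbf{U}\,\mathrm{diag}(\hat{x})\mathbf{U}^\intercal$. For $f\in\mathcal{L}(G)$ let $(\mathbf{K}_f)_{ij}=(\mathbf{C}_{e_j}f)(v_i)$; $f$ is a positive definite function if $\mathbf{K}_f$ is symmetric strictly positive definite. For distinct nodes $w_k=v_{j_k}$, $k=1,\dots,N$, let $\mathbf{K}_{f,W}\in\mathbb{R}^{N\times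 N}$, $(\mathbf{K}_{f,W})_{kl}=(\mathbf{C}_{e_{j_l}}f)(w_k)$; the GBF interpolant is $\mathrm{I}_Wx=\sum_{k=1}^Nc_k\mathbf{C}_{e_{j_k}}f$ where $\mathbf{K}_{f,W}c=(x(w_1),\dots,x(w_N))^\intercal$. *)

(* Defs.v *)
From HB Require Import structures.
From mathcomp Require Import all_boot all_order all_algebra.
From mathcomp Require Import classical_sets boolp reals.
Set Implicit Arguments. Unset Strict Implicit. Unset Printing Implicit Defensive.
Import Order.TTheory GRing.Theory Num.Theory.
Local Open Scope ring_scope.
Local Open Scope classical_set_scope.

Section GBF.
Variable R : realType.

Definition enorm n (x : 'cV[R]_n) : R := Num.sqrt (\sum_i x i 0 ^+ 2).

Definition specnorm m n (M : 'M[R]_(m, n)) : R :=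
  sup [set enorm (M *m x) | x in [set x : 'cV[R]_n | enorm x <= 1]].

Definition evec n (j : 'I_n) : 'cV[R]_n := delta_mx j 0.

Definition degmx n (A : 'M[R]_n) : 'M[R]_n := diag_mx (\row_i \sum_k A i k).
Definition deg_invsqrt n (A : 'M[R]_n) : 'M[R]_n :=
  diag_mx (\row_i (Num.sqrt (\sum_k A i k))^-1).
Definition normLap n (A : 'M[R]_n) : 'M[R]_n :=
  1%:M - deg_invsqrt A *m A *m deg_invsqrt A.

Definition gft n (U : 'M[R]_n) (x : 'cV[R]_n) : 'cV[R]_n := U^T *m x.
Definition convop n (U : 'M[R]_n) (x : 'cV[R]_n) : 'M[R]_n :=
  U *m diag_mx (gft U x)^T *m U^T.

Definition Kmat n (U : 'M[R]_n) (f : 'cV[R]_n) : 'M[R]_n :=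
  \matrix_(i, j) (convop U (evec j) *m f) i 0.

Definition pos_def_fun n (U : 'M[R]_n) (f : 'cV[R]_n) : Prop :=
  (Kmat U f)^T = Kmat U f /\
  forall x : 'cV[R]_n, x != 0 -> 0 < (x^T *m Kmat U f *m x) 0 0.

(* (K_{f,W})_{kl} = (C_{e_{j_l}} f)(w_k), nodes w_k = v_{w k} *)
Definition KmatW n N (U : 'M[R]_n) (f : 'cV[R]_n) (w : 'I_N -> 'I_n) : 'M[R]_N :=
  \matrix_(k, l) (convop U (evec (w l)) *m f) (w k) 0.

Definition gbf_interp n N (U : 'M[R]_n) (f : 'cV[R]_n) (w : 'I_N -> 'I_n)
    (x : 'cV[R]_n) : 'cV[R]_n :=
  let c := invmx (KmatW U f w) *m (\col_k x (w k) 0) in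
  \sum_k c k 0 *: (convop U (evec (w k)) *m f).

End GBF.

(* Main.v *)
Require Import Defs.
From HB Require Import structures.
From mathcomp Require Import all_boot all_order all_algebra.
From mathcomp Require Import classical_sets boolp reals.
From mathcomp Require Import ring lra.
Set Implicit Arguments. Unset Strict Implicit. Unset Printing Implicit Defensive.
Import Order.TTheory GRing.Theory Num.Theory.
Local Open Scope ring_scope.
Local Open Scope classical_set_scope.

Section Aux.
Variable R : realType.

Definition bf n (x y : 'cV[R]_n) : R := \sum_i x i 0 * y i 0.
Definition qf n (x : 'cV[R]_n) : R := \sum_i x i 0 ^+ 2.

Lemma bfE n (x y : 'cV[R]_n) : bf x y = (x^T *m y) 0 0.
Proof. by rewrite /bf mxE; apply: eq_bigr => i _; rewrite mxE. Qed.

Lemma qfE n (x : 'cV[R]_n) : qf x = bf x x.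
Proof. by apply: eq_bigr => i _; rewrite expr2. Qed.

Lemma qf_ge0 n (x : 'cV[R]_n) : 0 <= qf x.
Proof. by apply: sumr_ge0 => i _; rewrite sqr_ge0. Qed.

Lemma qf_eq0 n (x : 'cV[R]_n) : qf x = 0 -> x = 0.
Proof.
move=> H; apply/matrixP => i j; rewrite (ord1 j) mxE.
have h : x i 0 ^+ 2 = 0.
  by apply: (psumr_eq0P (P := xpredT) _ H) => // k _; rewrite sqr_ge0.
by move/eqP: h; rewrite sqrf_eq0 => /eqP.
Qed.

Lemma enormE n (x : 'cV[R]_n) : enorm x = Num.sqrt (qf x).
Proof. by []. Qed.

Lemma enorm_ge0 n (x : 'cV[R]_n) : 0 <= enorm x.
Proof. exact: sqrtr_ge0. Qed.

Lemma enorm_le n m (x : 'cV[R]_n) (y : 'cV[R]_m) c : 0 <= c ->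
  qf x <= c ^+ 2 * qf y -> enorm x <= c * enorm y.
Proof.
move=> c0 H; rewrite !enormE -(ger0_norm c0) -sqrtr_sqr -sqrtrM ?sqr_ge0 //.
by rewrite ler_sqrt // mulr_ge0 ?sqr_ge0 ?qf_ge0.
Qed.

Lemma enorm_le1 n m (x : 'cV[R]_n) (y : 'cV[R]_m) :
  qf x <= qf y -> enorm x <= enorm y.
Proof. by move=> H; rewrite -[enorm y]mul1r; apply: enorm_le => //; rewrite expr1n mul1r. Qed.

Lemma qfZ n a (x : 'cV[R]_n) : qf (a *: x) = a ^+ 2 * qf x.
Proof. rewrite /qf mulr_sumr; apply: eq_bigr => i _; rewrite mxE; exact: exprMn. Qed.

Lemma enormZ n a (x : 'cV[R]_n) : enorm (a *: x) = `|a| * enorm x.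
Proof. by rewrite !enormE qfZ sqrtrM ?sqr_ge0 // sqrtr_sqr. Qed.

Lemma enorm0 n : enorm (0 : 'cV[R]_n) = 0.
Proof. by rewrite enormE /qf big1 ?sqrtr0 // => i _; rewrite mxE expr0n. Qed.

Lemma enorm_eq0 n (x : 'cV[R]_n) : enorm x = 0 -> x = 0.
Proof.
move=> H; apply: qf_eq0; rewrite -[qf x]sqr_sqrtr ?qf_ge0 //.
by rewrite -enormE H expr0n.
Qed.

Lemma qf_orth m n (U : 'M[R]_(m, n)) (y : 'cV[R]_n) : U^T *m U = 1%:M -> qf (U *m y) = qf y.
Proof. by move=> HU; rewrite !qfE !bfE trmx_mul -mulmxA (mulmxA U^T) HU mul1mx. Qed.

Lemma specnorm_le m n (M : 'M[R]_(m, n)) c : 0 <= c ->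
  (forall x, enorm (M *m x) <= c * enorm x) -> specnorm M <= c.
Proof.
move=> c0 H; apply: ge_sup.
  by exists (enorm (M *m 0)); exists 0 => //=; rewrite enorm0 ler01.
move=> _ [x /= x1 <-]; apply: le_trans (H x) _.
by rewrite -[leRHS]mulr1 ler_wpM2l.
Qed.

Lemma specnorm_hasub m n (M : 'M[R]_(m, n)) c :
  (forall x, enorm (M *m x) <= c * enorm x) ->
  has_ubound [set enorm (M *m x) | x in [set x : 'cV[R]_n | enorm x <= 1]].
Proof.
move=> H; exists `|c| => _ [x /= x1 <-]; apply: le_trans (H x) _.
apply: le_trans (ler_norm _) _; rewrite normrM (ger0_norm (enorm_ge0 _)).
by rewrite -[leRHS]mulr1 ler_wpM2l.
Qed.

Lemma specnorm_ge0 m n (M : 'M[R]_(m, n)) c :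
  (forall x, enorm (M *m x) <= c * enorm x) -> 0 <= specnorm M.
Proof.
move=> H; have := ub_le_sup (specnorm_hasub H); apply.
by exists 0; rewrite /= ?enorm0 ?ler01 // mulmx0 enorm0.
Qed.

Lemma enorm_spec m n (M : 'M[R]_(m, n)) c x :
  (forall x, enorm (M *m x) <= c * enorm x) -> enorm (M *m x) <= specnorm M * enorm x.
Proof.
move=> H; have [x0|nx0] := eqVneq x 0.
  by rewrite x0 mulmx0 !enorm0 mulr0.
have ex : 0 < enorm x.
  rewrite lt_neqAle enorm_ge0 andbT eq_sym; apply/eqP => /enorm_eq0 h.
  by rewrite h eqxx in nx0.
have : enorm (M *m ((enorm x)^-1 *: x)) <= specnorm M.
  apply: (ub_le_sup (specnorm_hasub H)).
  exists ((enorm x)^-1 *: x) => //=.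
  by rewrite enormZ ger0_norm ?invr_ge0 ?enorm_ge0 // mulVf // gt_eqF.
rewrite -scalemxAr enormZ ger0_norm ?invr_ge0 ?enorm_ge0 //.
by rewrite -ler_pdivlMl ?invr_gt0 // invrK mulrC.
Qed.


Lemma mul_delta n m (K : 'M[R]_(m, n)) j i : (K *m evec R j) i 0 = K i j.
Proof.
rewrite mxE (bigD1 j) //= big1 ?addr0 => [|l /negbTE H]; rewrite !mxE ?eqxx ?H ?andbF ?mulr0 ?mulr1 //.
Qed.

Lemma diag_comm n (a b : 'cV[R]_n) : diag_mx a^T *m b = diag_mx b^T *m a.
Proof. by rewrite !mul_diag_mx; apply/matrixP => i j; rewrite !mxE (ord1 j) mulrC. Qed.

Lemma quad_diag n (d : 'rV[R]_n) y : bf y (diag_mx d *m y) = \sum_i d 0 i * y i 0 ^+ 2.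
Proof. by rewrite /bf mul_diag_mx; apply: eq_bigr => i _; rewrite mxE; lra. Qed.

Lemma qf_diag_le n (d : 'rV[R]_n) y M : (forall i, 0 <= d 0 i <= M) ->
  qf (diag_mx d *m y) <= M ^+ 2 * qf y.
Proof.
move=> H; rewrite /qf mul_diag_mx mulr_sumr; apply: ler_sum => i _; rewrite mxE.
have /andP [h1 h2] := H i; have h3 := sqr_ge0 (y i 0).
rewrite exprMn; apply: ler_wpM2r => //; rewrite lerXn2r ?nnegrE //.
exact: le_trans h2.
Qed.


Section Emat.
Variables (n N : nat) (w : 'I_N -> 'I_n).
Definition Emx : 'M[R]_(n, N) := \matrix_(i, k) evec R (w k) i 0.

Lemma EmxE i k : Emx i k = (i == w k)%:R.
Proof. by rewrite !mxE eqxx andbT. Qed.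

Lemma Et_mul p (K : 'M[R]_(n, p)) k j : (Emx^T *m K) k j = K (w k) j.
Proof.
rewrite mxE (bigD1 (w k)) //= big1 ?addr0 => [|i /negbTE H].
  by rewrite mxE EmxE eqxx mul1r.
by rewrite mxE EmxE H mul0r.
Qed.

Lemma mul_E p (K : 'M[R]_(p, n)) i l : (K *m Emx) i l = K i (w l).
Proof.
rewrite mxE (bigD1 (w l)) //= big1 ?addr0 => [|j /negbTE H].
  by rewrite EmxE eqxx mulr1.
by rewrite EmxE H mulr0.
Qed.

Lemma EtE : injective w -> Emx^T *m Emx = 1%:M.
Proof.
move=> wi; apply/matrixP => k l; rewrite Et_mul EmxE !mxE.
by rewrite (inj_eq wi).
Qed.

Lemma qf_Et (x : 'cV[R]_n) : injective w -> qf (Emx^T *m x) <= qf x.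
Proof.
move=> wi.
have -> : qf (Emx^T *m x) = \sum_(i in [set w k | k in [set: 'I_N]]%SET) x i 0 ^+ 2.
  rewrite big_imset /=; last by move=> a b _ _; apply: wi.
  rewrite /qf; apply: eq_big => [k|k _]; first by rewrite !inE.
  by rewrite Et_mul.
rewrite /qf [leRHS](bigID (mem [set w k | k in [set: 'I_N]]%SET)) /= lerDl.
by apply: sumr_ge0 => i _; rewrite sqr_ge0.
Qed.

End Emat.

End Aux.
Theorem theorem8 (R : realType) (n N : nat) (A : 'M[R]_n)
  (U : 'M[R]_n) (lam : 'rV[R]_n) (f : 'cV[R]_n) (w : 'I_N -> 'I_n) :
  (0 < n)%N ->
  A^T = A -> (forall i j, 0 <= A i j) -> (forall i, 0 < \sum_k A i k) ->
  U^T *m U = 1%:M -> normLap A = U *m diag_mx lam *m U^T ->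
  pos_def_fun U f ->
  injective w ->
  sup [set enorm (gbf_interp U f w x) | x in [set x : 'cV[R]_n | enorm x <= 1]]
    <= specnorm (invmx (KmatW U f w)) * specnorm (Kmat U f)
  /\ specnorm (invmx (KmatW U f w)) * specnorm (Kmat U f)
    <= sup (range (fun k : 'I_n => gft U f k 0))
       / inf (range (fun k : 'I_n => gft U f k 0)).
Proof.
move=> hn AT A0 Apos HU HL [Ksym Kpd] wi.
pose D := diag_mx (gft U f)^T.
have HU' : U *m U^T = 1%:M := mulmx1C HU.
have convE j : convop U (evec R j) *m f = U *m D *m U^T *m evec R j.
  by rewrite /convop -!mulmxA /D /gft diag_comm.
have KE : Kmat U f = U *m D *m U^T.
  by apply/matrixP => i j; rewrite mxE convE mul_delta.
have bfK y : bf y (Kmat U f *m y) = \sum_i gft U f i 0 * (U^T *m y) i 0 ^+ 2.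
  have <- : bf (U^T *m y) (D *m (U^T *m y)) = \sum_i gft U f i 0 * (U^T *m y) i 0 ^+ 2.
    by rewrite quad_diag; apply: eq_bigr => i _; rewrite mxE.
  by rewrite KE !bfE trmx_mul trmxK !mulmxA.
have dpos k : 0 < gft U f k 0.
  pose x := U *m evec R k.
  have xn : x != 0.
    apply/eqP => x0.
    have : U^T *m x = evec R k by rewrite /x mulmxA HU mul1mx.
    rewrite x0 mulmx0 => /matrixP /(_ k 0); rewrite !mxE !eqxx /= => /eqP.
    by rewrite eq_sym oner_eq0.
  have := Kpd x xn; rewrite -mulmxA -bfE bfK /x mulmxA HU mul1mx.
  rewrite (bigD1 k) //= big1 ?addr0 => [|i /negbTE H]; rewrite !mxE ?eqxx ?H //=.
    by rewrite expr1n mulr1.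
  by rewrite expr0n mulr0.
pose k0 := Ordinal hn.
case: (@arg_minP _ _ _ k0 xpredT (fun k => gft U f k 0) isT) => kmin _ Hmin.
case: (@arg_maxP _ _ _ k0 xpredT (fun k => gft U f k 0) isT) => kmax _ Hmax.
pose S := range (fun k : 'I_n => gft U f k 0).
have hub : has_ubound S by exists (gft U f kmax 0) => _ [k _ <-]; exact: Hmax.
have hlb : has_lbound S by exists (gft U f kmin 0) => _ [k _ <-]; exact: Hmin.
have S0 : S !=set0 by exists (gft U f k0 0), k0.
have dM k : gft U f k 0 <= sup S by apply: (ub_le_sup hub); exists k.
have dm k : inf S <= gft U f k 0 by apply: (ge_inf hlb); exists k.
have mpos : 0 < inf S.
  apply: (lt_le_trans (dpos kmin)); apply: lb_le_inf => // _ [k _ <-]; exact: Hmin.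
have Mpos : 0 <= sup S := le_trans (ltW (dpos k0)) (dM k0).
have Kb x : enorm (Kmat U f *m x) <= sup S * enorm x.
  apply: enorm_le => //; rewrite KE -!mulmxA qf_orth //.
  apply: le_trans (qf_diag_le (M := sup S) _ _) _ => [i|].
    by rewrite mxE ltW ?dpos ?dM.
  by rewrite qf_orth ?trmxK.
have Kq y : inf S * qf y <= bf y (Kmat U f *m y).
  have <- : qf (U^T *m y) = qf y by rewrite qf_orth ?trmxK.
  rewrite bfK /qf mulr_sumr; apply: ler_sum => i _; apply: ler_wpM2r => //.
  by rewrite sqr_ge0.
pose E := Emx R w.
have KWE : KmatW U f w = E^T *m Kmat U f *m E.
  apply/matrixP => k l; rewrite [LHS]mxE mul_E Et_mul [Kmat _ _ _ _]mxE //.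
have KWsym : (KmatW U f w)^T = KmatW U f w.
  by rewrite KWE !trmx_mul trmxK Ksym mulmxA.
have KWq c : inf S * qf c <= bf c (KmatW U f w *m c).
  have -> : bf c (KmatW U f w *m c) = bf (E *m c) (Kmat U f *m (E *m c)).
    by rewrite KWE !bfE trmx_mul !mulmxA.
  by rewrite -[qf c](qf_orth _ (EtE R wi)).
have KWsq c : inf S ^+ 2 * qf c <= qf (KmatW U f w *m c).
  have h0 := qf_ge0 (KmatW U f w *m c - inf S *: c).
  have hex : qf (KmatW U f w *m c - inf S *: c) =
     qf (KmatW U f w *m c) - 2 * inf S * bf c (KmatW U f w *m c) + inf S ^+ 2 * qf c.
    rewrite /qf /bf !mulr_sumr -sumrB -big_split; apply: eq_bigr => i _.
    set a := KmatW U f w *m c; rewrite !mxE /=; ring.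
  have h1 := KWq c; have h2 := qf_ge0 c.
  rewrite hex in h0; nra.
have KWu : KmatW U f w \in unitmx.
  rewrite unitmxE unitfE; apply/negP => /det0P [v vn vK].
  have h : KmatW U f w *m v^T = 0 by rewrite -KWsym -trmx_mul vK trmx0.
  have := KWsq v^T; rewrite h.
  have -> : qf (0 : 'cV[R]_N) = 0 by rewrite /qf big1 // => i _; rewrite mxE expr0n.
  move=> h3.
  have : qf v^T = 0.
    apply/eqP; rewrite eq_le qf_ge0 andbT.
    by rewrite -(ler_pM2l (exprn_gt0 2 mpos)) mulr0.
  move/qf_eq0 => /(congr1 trmx); rewrite trmxK trmx0 => v0.
  by rewrite v0 eqxx in vn.
have Kib y : enorm (invmx (KmatW U f w) *m y) <= (inf S)^-1 * enorm y.
  apply: enorm_le; first by rewrite invr_ge0 ltW.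
  have := KWsq (invmx (KmatW U f w) *m y); rewrite mulKVmx //.
  by rewrite exprVn ler_pdivlMl ?exprn_gt0.
have sK0 := specnorm_ge0 Kb; have sKi0 := specnorm_ge0 Kib.
have sKle := specnorm_le Mpos Kb.
have mi0 : 0 <= (inf S)^-1 by rewrite invr_ge0 ltW.
have sKile := specnorm_le mi0 Kib.
split.
  apply: ge_sup.
    by exists (enorm (gbf_interp U f w 0)); exists 0 => //=; rewrite enorm0 ler01.
  move=> _ [x /= x1 <-].
  have gE : gbf_interp U f w x =
      Kmat U f *m (E *m (invmx (KmatW U f w) *m (E^T *m x))).
    rewrite /gbf_interp /=.
    have -> : \col_k x (w k) 0 = E^T *m x.
      by apply/matrixP => k z; rewrite (ord1 z) Et_mul mxE.
    set c := invmx (KmatW U f w) *m (E^T *m x).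
    have -> : E *m c = \sum_k c k 0 *: evec R (w k).
      apply/matrixP => i z; rewrite (ord1 z) summxE mxE; apply: eq_bigr => k _.
      by rewrite !mxE mulrC.
    rewrite mulmx_sumr; apply: eq_bigr => k _; rewrite -scalemxAr; congr (_ *: _).
    by apply/matrixP => i z; rewrite (ord1 z) mul_delta [Kmat _ _ _ _]mxE.
  rewrite gE; apply: le_trans (enorm_spec _ Kb) _.
  rewrite [leRHS]mulrC; apply: ler_wpM2l => //.
  rewrite enormE qf_orth ?EtE // -enormE.
  apply: le_trans (enorm_spec _ Kib) _.
  rewrite -[leRHS]mulr1; apply: ler_wpM2l => //; apply: le_trans x1.
  by apply: enorm_le1; apply: qf_Et.
apply: le_trans (ler_pM sKi0 sK0 sKile sKle) _.
by rewrite mulrC.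
Qed.
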